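(* Let $n>p\ge 2$ and consider the linear model $\mathbf{y}=\mathbf{X}\boldsymbol{\beta}+\boldsymbol{\varepsilon}$, where $\mathbf{X}=[\mathbf{x}_1,\dots,\mathbf{x}_p]$ is a known $n\times p$ matrix with linearly independent columns, each column having mean $0$ and Euclidean length $1$, $\boldsymbol{\beta}=(\beta_1,\dots,\beta_p)^T$ is unknown, and $E(\boldsymbol{\varepsilon})=\mathbf{0}$, $\mathrm{var}(\boldsymbol{\varepsilon})=\mathbf{I}$. Suppose there is a constant $r>0$ with $\mathrm{corr}(\mathbf{x}_i,\mathbf{x}_j)=r$ for all $i\ne j$. Let $\hat{\boldsymbol{\beta}}=(\mathbf{X}^T\mathbf{X})^{-1}\mathbf{X}^T\mathbf{y}$, and for $\mathbf{w}$ in the simplex $W=\{\mathbf{w}\in\mathbb{R}^p: w_i\ge0,\ \sum_i w_i=1\}$ write $\mathrm{var}(\hat{\xi}(\mathbf{w}),r)$ for the variance of $\mathbf{w}^T\hat{\boldsymbol{\beta}}$ (which depends only on $p$, $r$ and $\mathbf{w}$). Let $\mathbf{w}_j\in W$ be the $j$-th standard basis vector, so that $\mathbf{w}_j^T\hat{\boldsymbol{\beta}}=\hat\beta_j$. Then for each fixed $r$, $$\mathrm{var}(\hat{\beta}_j,r)=\mathrm{var}(\hat{\xi}(\mathbf{w}_j),r)=\max_{\mathbf{w}\in W}\mathrm{var}(\hat{\xi}(\mathbf{w}),r).$$ Further, $\mathrm{var}(\hat{\beta}_j,r)$, viewed as a function of $r\in(0,1)$, is strictly monotone increasing and $\lim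_{r\to1}\mathrm{var}(\hat{\beta}_j,r)=+\infty$.
   Context: The variance of $\mathbf{w}^T\hat{\boldsymbol\beta}$ in this model equals $\mathbf{w}^T(\mathbf{X}^T\mathbf{X})^{-1}\mathbf{w}$, where $\mathbf{X}^T\mathbf{X}$ has $1$ on the diagonal and $r$ off the diagonal; hence it is a function of $p$, $r$ and $\mathbf{w}$ only. *)

(* Defs.v *)
From HB Require Import structures.
From mathcomp Require Import all_boot all_order all_algebra.
From mathcomp Require Import all_classical all_reals all_analysis.
Set Implicit Arguments. Unset Strict Implicit. Unset Printing Implicit Defensive.
Import Order.TTheory GRing.Theory Num.Theory.
Local Open Scope ring_scope.

Section Defs.
Variable R : realType.

Definition mean {n} (x : 'cV[R]_n) : R := (\sum_i x i 0) / n%:R.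

Definition corr {n} (x y : 'cV[R]_n) : R :=
  (\sum_i (x i 0 - mean x) * (y i 0 - mean y)) /
  Num.sqrt ((\sum_i (x i 0 - mean x) ^+ 2) * (\sum_i (y i 0 - mean y) ^+ 2)).

Definition vlen {n} (x : 'cV[R]_n) : R := Num.sqrt (\sum_i x i 0 ^+ 2).

Definition equicorr_design {n p} (X : 'M[R]_(n, p)) (r : R) : Prop :=
  [/\ \rank X = p,
      forall i : 'I_p, mean (col i X) = 0,
      forall i : 'I_p, vlen (col i X) = 1
    & forall i k : 'I_p, i != k -> corr (col i X) (col k X) = r].

(* var(w^T betahat) = w^T (X^T X)^{-1} w  (var(eps) = I) *)
Definition var_xi {n p} (X : 'M[R]_(n, p)) (w : 'cV[R]_p) : R :=
  (w^T *m invmx (X^T *m X) *m w) 0 0.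

Definition simplex {p} (w : 'cV[R]_p) : Prop :=
  (forall i, 0 <= w i 0) /\ \sum_i w i 0 = 1.

Definition ej {p} (j : 'I_p) : 'cV[R]_p := delta_mx j 0.

Definition eqcorr_gram p (r : R) : 'M[R]_p :=
  \matrix_(i, k) (if i == k then 1 else r).

Definition var_r p (r : R) (w : 'cV[R]_p) : R :=
  (w^T *m invmx (eqcorr_gram p r) *m w) 0 0.

End Defs.
Arguments ej {R p} j.
Arguments var_r {R} p r w.
Arguments eqcorr_gram {R} p r.

(* Main.v *)
Require Import Defs.
From HB Require Import structures.
From mathcomp Require Import all_boot all_order all_algebra.
From mathcomp Require Import all_classical all_reals all_analysis.
From mathcomp Require Import ring lra.
Import Order.TTheory GRing.Theory Num.Theory.
Import numFieldNormedType.Exports.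
Local Open Scope classical_set_scope.
Local Open Scope ring_scope.

Section H.
Variable R : realType.
Variable p : nat.
Local Notation J := (const_mx 1 : 'M[R]_p).

Lemma gramE (r : R) : eqcorr_gram p r = (1 - r)%:M + r *: J.
Proof.
apply/matrixP=> i k; rewrite !mxE; case: eqP => _ /=; lra.
Qed.

Lemma JJ : J *m J = p%:R *: J.
Proof.
apply/matrixP=> i k; rewrite !mxE.
under eq_bigr do rewrite !mxE mulr1.
by rewrite sumr_const card_ord mulr1 -[RHS]mulr_natl mulr1.
Qed.

Lemma inv_uniq (G M : 'M[R]_p) : G *m M = 1%:M -> invmx G = M.
Proof.
move=> GM; have [uG _] := mulmx1_unit GM.
by rewrite -[RHS](mulKmx uG) GM mulmx1.
Qed.

Lemma gram_inv (r : R) : r != 1 -> 1 + (p%:R - 1) * r != 0 ->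
  invmx (eqcorr_gram p r) =
  (1 - r)^-1%:M + (- (r / ((1 - r) * (1 + (p%:R - 1) * r)))) *: J.
Proof.
move=> r1 d0; apply: inv_uniq; rewrite gramE.
rewrite mulmxDl !mulmxDr -!scalemxAl -!scalemxAr JJ !mul_scalar_mx mul_mx_scalar.
have h1 : 1 - r != 0 by rewrite subr_eq0 eq_sym.
apply/matrixP=> i k; rewrite !mxE; case: eqP => _ /=; field; by rewrite h1 d0.
Qed.

Lemma quad (c d : R) (w : 'cV[R]_p) :
  (w^T *m (c%:M + d *: J) *m w) 0 0 =
  c * \sum_i w i 0 ^+ 2 + d * (\sum_i w i 0) ^+ 2.
Proof.
rewrite mulmxDr mulmxDl mul_mx_scalar -scalemxAr -scalemxAl !mxE.
congr (_ + _).
  by congr (_ * _); apply: eq_bigr => i _; rewrite !mxE expr2.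
rewrite expr2 mulr_sumr mulr_sumr; apply: eq_bigr => i _; rewrite !mxE.
rewrite mulrA; congr (_ * _ * _).
apply: eq_bigr => k _; rewrite !mxE.
by rewrite mulr1.
Qed.

Lemma sq1 n (X : 'M[R]_(n, p)) i : vlen (col i X) = 1 -> \sum_l X l i ^+ 2 = 1.
Proof.
rewrite /vlen => h.
have h0 : 0 <= \sum_l col i X l 0 ^+ 2 by apply: sumr_ge0 => l _; exact: sqr_ge0.
have := sqr_sqrtr h0; rewrite h expr1n => ->.
by apply: eq_bigr => l _; rewrite mxE.
Qed.

Lemma design_gram n (X : 'M[R]_(n, p)) r :
  equicorr_design X r -> X^T *m X = eqcorr_gram p r.
Proof.
case=> _ hm hl hc; apply/matrixP=> i k; rewrite !mxE.
case: eqP => [<-|/eqP ik].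
  rewrite -(sq1 _ _ _ (hl i)); apply: eq_bigr => l _; by rewrite !mxE expr2.
rewrite -(hc i k ik) /corr !hm.
have e : forall m, \sum_l (col m X l 0 - 0) ^+ 2 = 1.
  by move=> m; rewrite -(sq1 _ _ _ (hl m)); apply: eq_bigr => l _; rewrite mxE subr0.
rewrite !e mulr1 sqrtr1 divr1; apply: eq_bigr => l _; by rewrite !mxE !subr0.
Qed.

Lemma r_le1 n (X : 'M[R]_(n, p)) r (i k : 'I_p) : i != k ->
  equicorr_design X r -> r <= 1.
Proof.
move=> ik hd; have g := @design_gram _ _ _ hd.
have : (X^T *m X) i k = r by rewrite g mxE (negbTE ik).
rewrite mxE => <-.
case: hd => _ _ hl _.
have h0 : 0 <= \sum_l (X l i - X l k) ^+ 2 by apply: sumr_ge0 => l _; exact: sqr_ge0.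
have e : \sum_l (X l i - X l k) ^+ 2 =
  \sum_l X l i ^+ 2 + \sum_l X l k ^+ 2 - 2 * \sum_l X^T i l * X l k.
  rewrite mulr_sumr -big_split -sumrB; apply: eq_bigr => l _; rewrite !mxE /=; ring.
rewrite e (sq1 _ _ _ (hl i)) (sq1 _ _ _ (hl k)) in h0; lra.
Qed.

Lemma other (j : 'I_p) : (2 <= p)%N -> exists k : 'I_p, j != k.
Proof.
move=> hp; case: (eqVneq (val j) 0%N) => h.
  by exists (Ordinal hp); apply/eqP => /(congr1 val) /=; rewrite h.
have h0 : (0 < p)%N by apply: leq_ltn_trans (leq0n _) (ltn_ord j).
by exists (Ordinal h0); apply/eqP => e; move: h; rewrite e.
Qed.

Lemma ej_sum1 (j : 'I_p) : \sum_i (ej (R:=R) j) i 0 = 1.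
Proof.
rewrite (bigD1 j) //= big1 => [|i /negbTE ij]; rewrite !mxE ?eqxx ?ij //.
by rewrite addr0.
Qed.

Lemma ej_sum2 (j : 'I_p) : \sum_i (ej (R:=R) j) i 0 ^+ 2 = 1.
Proof.
rewrite (bigD1 j) //= big1 => [|i /negbTE ij]; rewrite !mxE ?eqxx ?ij //.
  by rewrite expr1n addr0.
by rewrite expr0n.
Qed.

Definition f (r : R) := (1 - r)^-1 - r / ((1 - r) * (1 + (p%:R - 1) * r)).

Lemma fE r : 0 < r < 1 -> (1 <= p)%N ->
  f r = (1 + (p%:R - 2) * r) / ((1 - r) * (1 + (p%:R - 1) * r)).
Proof.
move=> /andP[r0 r1] hp.
have hq : 1 <= p%:R :> R by rewrite ler1n.
have n1 : 1 - r != 0 by apply: lt0r_neq0; lra.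
have m : 0 <= (p%:R - 1) * r by apply: mulr_ge0; lra.
have n2 : 1 + (p%:R - 1) * r != 0 by apply: lt0r_neq0; lra.
rewrite /f; field; by rewrite n1 n2.
Qed.

Lemma varE r (w : 'cV[R]_p) : 0 < r < 1 -> (1 <= p)%N ->
  var_r p r w = (1 - r)^-1 * \sum_i w i 0 ^+ 2
     - r / ((1 - r) * (1 + (p%:R - 1) * r)) * (\sum_i w i 0) ^+ 2.
Proof.
move=> /andP[r0 r1] hp.
have hq : 1 <= p%:R :> R by rewrite ler1n.
have m : 0 <= (p%:R - 1) * r by apply: mulr_ge0; lra.
rewrite /var_r gram_inv ?quad; first by rewrite mulNr.
  by apply/negP => /eqP; lra.
by apply: lt0r_neq0; lra.
Qed.

Lemma varEj r (j : 'I_p) : 0 < r < 1 -> var_r p r (ej j) = f r.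
Proof.
move=> hr; have hp : (1 <= p)%N by apply: leq_ltn_trans (leq0n _) (ltn_ord j).
by rewrite varE // ej_sum1 ej_sum2 expr1n !mulr1.
Qed.

End H.
Section H2.
Variable R : realType.
Variable p : nat.
Lemma f_mono r1 r2 : (2 <= p)%N -> 0 < r1 -> r1 < r2 -> r2 < 1 -> f R p r1 < f R p r2.
Proof.
move=> hp h1 h12 h2.
have hq : 2 <= p%:R :> R by rewrite ler_nat.
have hp1 : (1 <= p)%N by apply: leq_trans hp.
have i1 : 0 < r1 < 1 by apply/andP; split; lra.
have i2 : 0 < r2 < 1 by apply/andP; split; lra.
rewrite (fE _ _ _ i1 hp1) (fE _ _ _ i2 hp1).
set q := p%:R - 1.
have -> : p%:R - 2 = q - 1 by rewrite /q; ring.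
have q1 : 1 <= q by rewrite /q; lra.
have m1 : 0 <= q * r1 by apply: mulr_ge0; lra.
have m2 : 0 <= q * r2 by apply: mulr_ge0; lra.
have d1 : 0 < (1 - r1) * (1 + q * r1) by apply: mulr_gt0; lra.
have d2 : 0 < (1 - r2) * (1 + q * r2) by apply: mulr_gt0; lra.
rewrite ltr_pdivrMr // mulrAC ltr_pdivlMr //.
have a : 0 < (r2 - r1) * (r2 + r1) by apply: mulr_gt0; lra.
have b : 0 <= (q - 1) * r1 * r2 * (r2 - r1).
  apply: mulr_ge0; last lra. apply: mulr_ge0; last lra. apply: mulr_ge0; lra.
have c : 0 < q * ((r2 - r1) * (r2 + r1) + (q - 1) * r1 * r2 * (r2 - r1)).
  apply: mulr_gt0; lra.
have id : (1 + (q - 1) * r2) * ((1 - r1) * (1 + q * r1)) - (1 + (q - 1) * r1) * ((1 - r2) * (1 + q * r2))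
   = q * ((r2 - r1) * (r2 + r1) + (q - 1) * r1 * r2 * (r2 - r1)) by ring.
by rewrite -subr_gt0 id.
Qed.

Lemma f_big x : (2 <= p)%N -> 0 < x < 1 -> (2 * (1 - x))^-1 <= f R p x.
Proof.
move=> hp hx; have /andP[h1 h2] := hx.
have hq : 2 <= p%:R :> R by rewrite ler_nat.
have hp1 : (1 <= p)%N by apply: leq_trans hp.
rewrite (fE _ _ _ hx hp1).
set q := p%:R - 1.
have -> : p%:R - 2 = q - 1 by rewrite /q; ring.
have q1 : 1 <= q by rewrite /q; lra.
have m1 : 0 <= q * x by apply: mulr_ge0; lra.
have m2 : 0 <= (q - 1) * x by apply: mulr_ge0; lra.
have n1 : 1 - x != 0 by apply: lt0r_neq0; lra.
have n2 : 1 + q * x != 0 by apply: lt0r_neq0; lra.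
rewrite -subr_ge0.
have -> : (1 + (q - 1) * x) / ((1 - x) * (1 + q * x)) - (2 * (1 - x))^-1
  = (1 + (q - 1) * x - x) / (2 * ((1 - x) * (1 + q * x))).
  by field; rewrite n1 n2.
apply: divr_ge0; first lra.
apply: mulr_ge0; first lra. apply: mulr_ge0; lra.
Qed.
End H2.

Arguments design_gram {R p n X r}.
Arguments r_le1 {R p n X r i k}.
Arguments other {p}.
Arguments varE {R p r w}.
Arguments varEj {R p r j}.
Arguments f_mono {R p r1 r2}.
Arguments f_big {R p x}.
Arguments ej_sum1 {R p j}.
Arguments ej_sum2 {R p j}.

Lemma var1 (R : realType) p (j k : 'I_p) (w : 'cV[R]_p) : j != k ->
  var_r p 1 w = (\sum_i w i 0) ^+ 2.
Proof.
move=> jk.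
have nu : eqcorr_gram p (1:R) \notin unitmx.
  rewrite unitmxE (determinant_alternate jk) ?unitr0 //.
  by move=> l; rewrite !mxE !if_same.
rewrite /var_r invmx_out // gramE subrr quad; ring.
Qed.

Lemma quad_ej (R : realType) p (j : 'I_p) (A : 'M[R]_p) :
  ((ej j)^T *m A *m ej j) 0 0 = A j j.
Proof. by rewrite /ej trmx_delta -rowE -colE !mxE. Qed.

Theorem corollary1 (R : realType) (n p : nat) (j : 'I_p) :
  (2 <= p)%N -> (p < n)%N ->
  (* the variance depends only on p, r, w *)
  (forall (r : R) (X : 'M[R]_(n, p)), 0 < r -> equicorr_design X r ->
     forall w : 'cV[R]_p, var_xi X w = var_r p r w) /\
  (* for each fixed r: var(betahat_j, r) = var(xi(w_j), r) = max_{w in W} var(xi(w), r) *)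
  (forall (r : R) (X : 'M[R]_(n, p)), 0 < r -> equicorr_design X r ->
     simplex (ej (R:=R) j) /\
     var_xi X (ej j) = (invmx (X^T *m X)) j j /\
     (forall w : 'cV[R]_p, simplex w -> var_xi X w <= var_xi X (ej j))) /\
  (* r |-> var(betahat_j, r) strictly increasing on (0,1) *)
  (forall r1 r2 : R, 0 < r1 -> r1 < r2 -> r2 < 1 ->
     var_r p r1 (ej j) < var_r p r2 (ej j)) /\
  (* lim_{r -> 1} var(betahat_j, r) = +oo *)
  (var_r p (x:R) (ej j) @[x --> (1:R)^'-] --> +oo).

Proof.
move=> hp hn.
have hp1 : (1 <= p)%N by apply: leq_trans hp.
have P1 : forall (r : R) (X : 'M[R]_(n, p)), 0 < r -> equicorr_design X r ->
     forall w : 'cV[R]_p, var_xi X w = var_r p r w.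
  by move=> r X r0 hd w; rewrite /var_xi /var_r (design_gram hd).
have [k jk] := other j hp.
split; first exact: P1.
split.
  move=> r X r0 hd; split.
    by split => [i|]; [rewrite mxE ler0n | exact: ej_sum1].
  split; first by rewrite /var_xi quad_ej.
  move=> w [w0 w1]; rewrite !(P1 r X) //.
  have r1 := r_le1 jk hd.
  case: (ltgtP r 1) => [rlt|rgt|->]; last first.
  - by rewrite !(var1 _ _ _ _ _ jk) w1 ej_sum1.
  - lra.
  have hr : 0 < r < 1 by apply/andP; split.
  rewrite !varE // ej_sum1 ej_sum2 w1 lerD2r.
  apply: ler_wpM2l; first by rewrite invr_ge0; lra.
  rewrite -w1; apply: ler_sum => i _.
  have wi1 : w i 0 <= 1.
    rewrite -w1 (bigD1 i) //= lerDl; apply: sumr_ge0 => l _; exact: w0.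
  rewrite expr2 -[X in _ <= X]mulr1; apply: ler_wpM2l => //.
split.
  move=> r1 r2 h1 h12 h2.
  have i1 : 0 < r1 < 1 by apply/andP; split; lra.
  have i2 : 0 < r2 < 1 by apply/andP; split; lra.
  rewrite !varEj //; exact: f_mono.
apply/cvgryPge => A.
set e := (2 * (`|A| + 1))^-1.
have e0 : 0 < e by rewrite invr_gt0; apply: mulr_gt0 => //; apply: ltr_pwDr.
near=> x.
have x0 : 0 < x by near: x; apply: nbhs_left_gt; exact: ltr01.
have x1 : x < 1 by near: x; exact: nbhs_left_lt.
have xe : 1 - x < e by near: x; exact: nbhs_left_ltBl.
have hx : 0 < x < 1 by apply/andP; split.
rewrite varEj //.
apply: le_trans (f_big hp hx).
have a0 : 0 < `|A| + 1 by apply: ltr_pwDr.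
have t : 2 * (`|A| + 1) * (1 - x) < 2 * (`|A| + 1) * e.
  by rewrite ltr_pM2l //; apply: mulr_gt0.
have t2 : 2 * (`|A| + 1) * e = 1 by rewrite /e divff //; apply: lt0r_neq0; apply: mulr_gt0.
have hA : A <= `|A| by exact: ler_norm.
rewrite -[X in _ <= X]mul1r ler_pdivlMr; last lra.
nra.
Unshelve. all: by end_near.
Qed.
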